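(* Let $\Gamma$ be a grid and let $r_1\leq r_2$. For each $i\in\{1,2\}$ let $Z_i$ be the $(r_i\times r_i)$-grid and suppose that $Z_i$ is a minor of $\Gamma$ with minor mapping $\mu_i$. Assume that $\mu_1(V(Z_1))\cap\mu_2(V(Z_2))=\emptyset$. For each $i\in\{1,2\}$ let $Y_i$ be the set of vertices in the first row of $Z_i$, for each $v\in Y_i$ pick some $q(v)\in\mu_i(v)$, and let $W_i=\{q(v): v\in Y_i\}$. Then $W_1\cup W_2$ is $1/384$-cut-linked in $\Gamma$.
   Context: The $(r\times\ell)$-grid is the Cartesian product $P_r\times P_\ell$ of paths; a grid is such a graph. If $H$ is a minor of $G$ (obtained by edge contractions, edge deletions and vertex deletions), the minor mapping $\mu:V(H)\to 2^{V(G)}$ sends each vertex of $H$ to the set of vertices of $G$ contracted into it; for $Z\subseteq V(H)$, $\mu(Z)=\bigcup_{v\in Z}\mu(v)$. A set $X\subseteq V(G)$ is $\alpha$-cut-linked in $G$ if for every partition of $V(G)$ into $\{A,B\}$ we have $|E(A,B)|\geq\alpha\cdot\min\{|A\cap X|,|B\cap X|\}$. *)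

(* Defs.v *)
(* Simple graphs are symmetric irreflexive relations on a finType. *)
From mathcomp Require Import all_boot all_order all_algebra rat.
Set Implicit Arguments. Unset Strict Implicit. Unset Printing Implicit Defensive.
Import Order.TTheory GRing.Theory Num.Theory.

Definition grid_adj (m n : nat) : rel ('I_m * 'I_n) :=
  fun x y =>
    ((x.1 == y.1) && ((x.2.+1 == y.2 :> nat) || (y.2.+1 == x.2 :> nat))) ||
    ((x.2 == y.2) && ((x.1.+1 == y.1 :> nat) || (y.1.+1 == x.1 :> nat))).

Definition connected_in (T : finType) (e : rel T) (S : {set T}) : Prop :=
  forall x y, x \in S -> y \in S ->
    connect (fun a b => [&& e a b, a \in S & b \in S]) x y.

Definition minor_map (TH TG : finType) (eH : rel TH) (eG : rel TG)
    (mu : TH -> {set TG}) : Prop :=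
  [/\ forall v, mu v != set0,
      forall v, connected_in eG (mu v),
      forall u v, u != v -> [disjoint mu u & mu v]
    & forall u v, eH u v ->
        exists x y, [/\ x \in mu u, y \in mu v & eG x y]].

Definition mu_img (TH TG : finType) (mu : TH -> {set TG}) (Z : {set TH}) : {set TG} :=
  \bigcup_(v in Z) mu v.

(* E(A,B): the set of edges with one end in A and the other in B
   (A, B disjoint, so ordered pairs count each edge once). *)
Definition cut_edges (T : finType) (e : rel T) (A B : {set T}) : {set T * T} :=
  [set p | [&& p.1 \in A, p.2 \in B & e p.1 p.2]].

Definition cut_linked (T : finType) (e : rel T) (alpha : rat) (X : {set T}) : Prop :=
  forall A B : {set T}, [disjoint A & B] -> A :|: B = setT ->
    (alpha * (minn #|A :&: X| #|B :&: X|)%:R <= (#|cut_edges e A B|)%:R)%R.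

Definition first_row (r : nat) : {set 'I_r * 'I_r} := [set v : 'I_r * 'I_r | nat_of_ord v.1 == 0].

(* Main.v *)
Require Import Defs.
From mathcomp Require Import all_boot all_order all_algebra rat.
From mathcomp Require Import zify.
From mathcomp.algebra_tactics Require Import lra.
Import GRing.Theory Num.Theory.
Set Implicit Arguments. Unset Strict Implicit. Unset Printing Implicit Defensive.

Lemma card_rel (I K : finType) (D : {set I}) (K0 : {set K}) (R : I -> K -> bool) :
  (forall i, i \in D -> exists k, (k \in K0) && R i k) ->
  (forall i i' k, i \in D -> i' \in D -> R i k -> R i' k -> i = i') ->
  #|D| <= #|K0|.
Proof.
move=> Hex Hun.
pose f i := [pick k in K0 | R i k].
have fS : forall i, i \in D -> exists2 k, f i = Some k & (k \in K0) && R i k.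
  move=> i iD; rewrite /f; case: pickP => [k Hk|H0]; first by exists k.
  by have [k Hk] := Hex i iD; move: (H0 k); rewrite Hk.
have inj : {in D &, injective f}.
  move=> i i' iD i'D Hf; have [k fk /andP[_ Rk]] := fS i iD.
  have [k' fk' /andP[_ Rk']] := fS i' i'D.
  by move: Hf; rewrite fk fk' => -[Ek]; apply: (Hun i i' k) => //; rewrite Ek.
rewrite -(card_in_imset inj) -(card_imset K0 (@Some_inj _)).
apply: subset_leq_card; apply/subsetP => o /imsetP[i iD ->].
have [k fk /andP[kK _]] := fS i iD; rewrite fk; exact: imset_f.
Qed.

Lemma nat_ivt (P : nat -> bool) m n : m <= n -> P m != P n ->
  exists i, m <= i < n /\ P i != P i.+1.
Proof.
elim: n => [|n IH] mn Pmn.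
  by move: mn; rewrite leqn0 => /eqP Em; rewrite Em eqxx in Pmn.
have mn' : m <= n.
  move: mn; rewrite leq_eqVlt => /orP[/eqP Em|//].
  by rewrite Em eqxx in Pmn.
case: (boolP (P n != P n.+1)) => Hn.
  by exists n; split=> //; rewrite ltnSn andbT.
move: Hn; rewrite negbK => /eqP Hn.
have [|i [H1 H2]] := IH mn'; first by rewrite Hn.
by exists i; split=> //; lia.
Qed.

Lemma ord_ivt n (Q : pred 'I_n) (k1 k2 : 'I_n) : Q k1 -> ~~ Q k2 ->
  exists k k' : 'I_n, (k.+1 == k' :> nat) && (Q k != Q k').
Proof.
case: n Q k1 k2 => [|n] Q k1 k2; first by case: k1.
move=> Q1 Q2.
pose P i := Q (inord i).
have PE : forall k : 'I_n.+1, P k = Q k by move=> k; rewrite /P inord_val.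
have [i [h1 Hi]] : exists i, i.+1 < n.+1 /\ P i != P i.+1.
  case: (leqP k1 k2) => h.
    have [|i [/andP[h1 h2] Hi]] := @nat_ivt P k1 k2 h; first by rewrite !PE Q1 (negbTE Q2).
    by exists i; split=> //; have := ltn_ord k2; lia.
  have [|i [/andP[h1 h2] Hi]] := @nat_ivt P k2 k1 (ltnW h); first by rewrite !PE Q1 (negbTE Q2).
  by exists i; split=> //; have := ltn_ord k1; lia.
have hi : i < n.+1 by lia.
exists (inord i), (inord i.+1); rewrite !inordK //= eqxx /=.
exact: Hi.
Qed.

Lemma cross_path (T : finType) (e : rel T) (S : {set T}) (P : pred T) x y :
  connected_in e S -> x \in S -> y \in S -> P x -> ~~ P y ->
  exists u v, [/\ u \in S, v \in S, e u v, P u & ~~ P v].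
Proof.
move=> HS xS yS Px Py.
move: (HS x y xS yS) => /connectP[p pth Ey].
elim: p x xS pth Ey Px => [|z p IH] x xS /=; first by move=> _ <- Px; rewrite Px in Py.
case/andP=> /and3P[exz _ zS] pth Ey Px.
case: (boolP (P z)) => Pz; first exact: IH pth Ey Pz.
by exists x, z.
Qed.

Definition bigU (T : finType) n (beta : 'I_n -> {set T}) := \bigcup_(k < n) beta k.

Lemma line_cross (T : finType) (e : rel T) n (beta : 'I_n -> {set T}) (P : pred T) x y :
  (forall u v, e u v -> e v u) ->
  (forall k, connected_in e (beta k)) ->
  (forall k k' : 'I_n, k.+1 = k' :> nat -> exists u v, [/\ u \in beta k, v \in beta k' & e u v]) ->
  x \in bigU beta -> y \in bigU beta -> P x -> ~~ P y ->
  exists u v, [/\ u \in bigU beta, v \in bigU beta, e u v, P u & ~~ P v].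
Proof.
move=> esym Hc Hadj /bigcupP[k1 _ xk1] /bigcupP[k2 _ yk2] Px Py.
have sub : forall k, beta k \subset bigU beta.
  by move=> k; apply/subsetP => z zk; apply/bigcupP; exists k.
case: (boolP [exists k, [exists z1 in beta k, [exists z2 in beta k, P z1 && ~~ P z2]]]).
  case/existsP=> k /existsP[z1 /andP[z1k /existsP[z2 /andP[z2k /andP[P1 P2]]]]].
  have [u [v [uk vk euv Pu Pv]]] := cross_path (Hc k) z1k z2k P1 P2.
  by exists u, v; split=> //; apply: (subsetP (sub k)).
rewrite negb_exists => /forallP Hu.
have unif : forall k z1 z2, z1 \in beta k -> z2 \in beta k -> P z1 -> P z2.
  move=> k z1 z2 z1k z2k P1; apply/negPn/negP => P2.
  move: (Hu k) => /existsP; apply; exists z1; rewrite z1k /=.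
  by apply/existsP; exists z2; rewrite z2k P1.
pose Q k := [forall z in beta k, P z].
have Q1 : Q k1 by apply/forall_inP => z zk; exact: unif xk1 zk Px.
have Q2 : ~~ Q k2 by apply/forall_inP => H; rewrite H in Py.
have [k [k' /andP[/eqP kk' Qk]]] := ord_ivt Q1 Q2.
have [u [v [uk vk' euv]]] := Hadj k k' kk'.
case: (boolP (Q k)) => Qkb.
  have Qk' : ~~ Q k' by move: Qk; rewrite Qkb; case: (Q k').
  clear Qk; rename Qk' into Qk.
  exists u, v; split.
  - exact: (subsetP (sub k)).
  - exact: (subsetP (sub k')).
  - by [].
  - by move/forall_inP: Qkb; apply.
  - apply/negP => Pv; move/forall_inP: Qk; apply => z zk'; exact: unif vk' zk' Pv.
have Qk' : Q k' by move: Qk; rewrite (negbTE Qkb); case: (Q k').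
clear Qk; rename Qk' into Qk.
exists v, u; split.
- exact: (subsetP (sub k')).
- exact: (subsetP (sub k)).
- exact: esym.
- by move/forall_inP: Qk; apply.
- apply/negP => Pu; move/forall_inP: Qkb; apply => z zk; exact: unif uk zk Pu.
Qed.

Definition colset (T : finType) r (mu : 'I_r * 'I_r -> {set T}) (j : 'I_r) :=
  bigU (fun y : 'I_r => mu (y, j)).
Definition muT (T : finType) r (mu : 'I_r * 'I_r -> {set T}) :=
  fun v : 'I_r * 'I_r => mu (v.2, v.1).

Lemma grid_adj_sym m n : forall u v, @grid_adj m n u v -> @grid_adj m n v u.
Proof.
move=> u v; rewrite /grid_adj.
by rewrite (eq_sym v.1) (eq_sym v.2) (orbC (v.2.+1 == _)) (orbC (v.1.+1 == _)).
Qed.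

Lemma minor_T (T : finType) (e : rel T) r (mu : 'I_r * 'I_r -> {set T}) :
  minor_map (@grid_adj r r) e mu -> minor_map (@grid_adj r r) e (muT mu).
Proof.
case=> H1 H2 H3 H4; split.
- by move=> v; exact: H1.
- by move=> v; exact: H2.
- move=> u v uv; apply: H3; apply: contra uv => /eqP E.
  by apply/eqP; case: u v E => [u1 u2] [v1 v2] /= [-> ->].
- move=> u v huv; apply: H4.
  by move: huv; rewrite /grid_adj /= orbC.
Qed.

Lemma sub_col (T : finType) r (mu : 'I_r * 'I_r -> {set T}) y j :
  mu (y, j) \subset colset mu j.
Proof. by apply/subsetP => z zk; apply/bigcupP; exists y. Qed.

Lemma col_cross (T : finType) (e : rel T) r (mu : 'I_r * 'I_r -> {set T}) (P : pred T) j x y :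
  (forall u v, e u v -> e v u) -> minor_map (@grid_adj r r) e mu ->
  x \in colset mu j -> y \in colset mu j -> P x -> ~~ P y ->
  exists u v, [/\ u \in colset mu j, v \in colset mu j, e u v, P u & ~~ P v].
Proof.
move=> esym [H1 H2 H3 H4] xj yj Px Py.
apply: (line_cross esym _ _ xj yj Px Py).
- by move=> k; exact: H2.
- move=> k k' kk'; apply: H4; rewrite /grid_adj /= eqxx /=.
  by rewrite kk' eqxx orbT.
Qed.

Lemma col_disj (T : finType) (e : rel T) r (mu : 'I_r * 'I_r -> {set T}) j j' z :
  minor_map (@grid_adj r r) e mu ->
  z \in colset mu j -> z \in colset mu j' -> j = j'.
Proof.
move=> [H1 H2 H3 H4] /bigcupP[y _ zy] /bigcupP[y' _ zy'].
case: (eqVneq (y, j) (y', j')) => [[_ ->]//|ne].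
by move: (H3 _ _ ne) => /disjointFr /(_ zy); rewrite zy'.
Qed.

Lemma mixed_count (T : finType) (e : rel T) r (mu : 'I_r * 'I_r -> {set T}) (A B : {set T}) :
  (forall u v, e u v -> e v u) -> minor_map (@grid_adj r r) e mu ->
  (forall v, (v \in B) = (v \notin A)) ->
  #|[set j | [exists z in colset mu j, z \in A] && [exists z in colset mu j, z \in B]]|
    <= #|cut_edges e A B|.
Proof.
move=> esym Hm hAB.
apply: (card_rel (R := fun j p => (p.1 \in colset mu j) && (p.2 \in colset mu j))).
- move=> j; rewrite inE => /andP[/existsP[z1 /andP[z1j z1A]] /existsP[z2 /andP[z2j z2B]]].
  rewrite hAB in z2B.
  have [u [v [uj vj euv uA vA]]] := col_cross (P := mem A) esym Hm z1j z2j z1A z2B.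
  exists (u, v); rewrite /cut_edges !inE /= uj vj euv hAB.
  by move: uA vA => /= -> ->.
- move=> i i' p _ _ /andP[p1 _] /andP[p1' _]; exact: col_disj Hm p1 p1'.
Qed.

Lemma width_core (T K : finType) (e : rel T) (col : T -> nat) (rw : T -> K) r
    (mu : 'I_r * 'I_r -> {set T}) x0 :
  (forall u v, e u v -> e v u) ->
  (forall u v, rw u = rw v -> col u = col v -> u = v) ->
  (forall u v, e u v -> col v <= (col u).+1) ->
  minor_map (@grid_adj r r) e mu ->
  (exists k0, forall v, v \in colset (muT mu) k0 -> col v <= x0) ->
  (forall j, exists2 v, v \in colset mu j & x0 <= col v) ->
  r <= #|K|.
Proof.
move=> esym hinj hcol Hm [k0 Hk0] Hj.
have Hm' := Hm; case: Hm' => H1 _ _ _.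
suff : #|[set: 'I_r]| <= #|[set: K]| by rewrite !cardsT card_ord.
apply: (card_rel (R := fun j kk => [exists z in colset mu j, (rw z == kk) && (col z == x0)])).
- move=> j _.
  have [w0 w0in] := set0Pn _ (H1 (k0, j)).
  have w0c : w0 \in colset mu j := subsetP (sub_col mu k0 j) w0 w0in.
  have w0r : col w0 <= x0 by apply: Hk0; exact: (subsetP (sub_col (muT mu) j k0)).
  have [w1 w1c w1x] := Hj j.
  have [z [zc zx]] : exists z, z \in colset mu j /\ col z = x0.
    case: (eqVneq (col w0) x0) => [E|ne]; first by exists w0.
    have h : col w0 < x0 by rewrite ltn_neqAle ne w0r.
    have h' : ~~ (col w1 < x0) by rewrite -leqNgt.
    have [u [v [uc vc euv Pu Pv]]] :=
      col_cross (P := fun v => col v < x0) esym Hm w0c w1c h h'.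
    exists v; split => //; have := hcol u v euv; move: Pu Pv => /=; lia.
  exists (rw z); rewrite inE /=; apply/existsP; exists z.
  by rewrite zc eqxx zx eqxx.
- move=> j j' kk _ _ /existsP[z /and3P[zc /eqP zk /eqP zx]]
    /existsP[z' /and3P[zc' /eqP zk' /eqP zx']].
  have Ez : z = z' by apply: hinj; [rewrite zk zk' | rewrite zx zx'].
  by subst z'; exact: col_disj Hm zc zc'.
Qed.

Lemma width (T K : finType) (e : rel T) (col : T -> nat) (rw : T -> K) r
    (mu : 'I_r * 'I_r -> {set T}) :
  (forall u v, e u v -> e v u) ->
  (forall u v, rw u = rw v -> col u = col v -> u = v) ->
  (forall u v, e u v -> col v <= (col u).+1) ->
  minor_map (@grid_adj r r) e mu ->
  r <= #|K|.
Proof.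
case: r mu => [|r] mu esym hinj hcol Hm; first by [].
pose ls (L : bool * 'I_r.+1) := if L.1 then colset mu L.2 else colset (muT mu) L.2.
pose Pm x := [exists L, [forall v in ls L, col v <= x]].
have exPm : exists x, Pm x.
  exists (\max_(v : T) col v); apply/existsP; exists (false, ord0).
  by apply/forall_inP => v _; exact: leq_bigmax.
have [x0 Px0 minx0] := ex_minnP exPm.
have Hm' := Hm; case: Hm' => H1 _ _ _.
have ne : forall L, exists2 v, v \in ls L & x0 <= col v.
  move=> L.
  case: (posnP x0) => [->|x0p].
    case: L => [[] k] /=.
      have [v vin] := set0Pn _ (H1 (ord0, k)); exists v => //.
      exact: (subsetP (sub_col mu ord0 k)).
    have [v vin] := set0Pn _ (H1 (k, ord0)); exists v => //.
    exact: (subsetP (sub_col (muT mu) ord0 k)).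
  case: (boolP [forall v in ls L, col v <= x0.-1]) => H.
    have : Pm x0.-1 by apply/existsP; exists L.
    move/minx0; lia.
  move: H; rewrite negb_forall_in => /exists_inP[v vin hv].
  by exists v => //; move: hv; rewrite -ltnNge; lia.
move/existsP: Px0 => [[[] k0] /forall_inP Hk0].
- apply: (width_core (mu := muT mu) esym hinj hcol (minor_T Hm)).
    by exists k0 => v vin; apply: Hk0; exact: vin.
  by move=> j; have [v vin hv] := ne (false, j); exists v.
- apply: (width_core esym hinj hcol Hm).
    by exists k0 => v vin; apply: Hk0; exact: vin.
  by move=> j; have [v vin hv] := ne (true, j); exists v.
Qed.

Lemma minor_Bcount (T : finType) (e : rel T) r (mu : 'I_r * 'I_r -> {set T})
    (q : 'I_r * 'I_r -> T) (A B : {set T}) s :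
  (forall u v, e u v -> e v u) -> minor_map (@grid_adj r r) e mu ->
  (forall v, v \in first_row r -> q v \in mu v) ->
  (forall v, (v \in B) = (v \notin A)) -> s = #|cut_edges e A B| -> #|B| <= s * s ->
  #|B :&: (q @: first_row r)| <= 3 * s.
Proof.
move=> esym Hm hq hAB Es hB.
have Hm' := Hm; case: Hm' => H1 H2 H3 H4.
set MC := [set j | [exists z in colset mu j, z \in A] && [exists z in colset mu j, z \in B]].
set PB := [set j | colset mu j \subset B].
have hMC : #|MC| <= s by rewrite Es; exact: mixed_count.
have hPB : #|PB| <= 2 * s.
  case: (set_0Vmem PB) => [->|[j0 j0P]]; first by rewrite cards0.
  set MR := [set k | [exists z in colset (muT mu) k, z \in A] &&
                     [exists z in colset (muT mu) k, z \in B]].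
  have hMR : #|MR| <= s by rewrite Es; exact: (mixed_count esym (minor_T Hm)).
  set PR := [set k | colset (muT mu) k \subset B].
  have cov : r <= #|MR| + #|PR|.
    rewrite -{1}[r]card_ord -cardsT; apply: leq_trans (leq_card_setU MR PR).
    apply: subset_leq_card; apply/subsetP => k _.
    have [z zin] := set0Pn _ (H1 (k, j0)).
    have zB : z \in B.
      move: j0P; rewrite inE => /subsetP; apply.
      exact: (subsetP (sub_col mu k j0)).
    have zr : z \in colset (muT mu) k by exact: (subsetP (sub_col (muT mu) j0 k)).
    case: (boolP [exists z' in colset (muT mu) k, z' \in A]) => h.
      rewrite inE; apply/orP; left; rewrite inE h /=.
      by apply/existsP; exists z; rewrite zr zB.
    rewrite inE; apply/orP; right; rewrite inE; apply/subsetP => z' z'in.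
    rewrite hAB; apply/negP => z'A; move/negP: h; apply.
    by apply/existsP; exists z'; rewrite z'in z'A.
  have prod : #|PR| * #|PB| <= s * s.
    rewrite -cardsX; apply: leq_trans hB.
    apply: (card_rel (R := fun kj v => v \in mu kj)).
    - move=> [k j] /setXP[kP jP].
      have [v vin] := set0Pn _ (H1 (k, j)); exists v; rewrite vin andbT.
      move: jP; rewrite inE => /subsetP; apply.
      exact: (subsetP (sub_col mu k j)).
    - move=> kj kj' v _ _ v1 v2.
      case: (eqVneq kj kj') => // neq.
      by move: (H3 _ _ neq) => /disjointFr /(_ v1); rewrite v2.
  have PBr : #|PB| <= r by have := max_card PB; rewrite card_ord.
  nia.
have HW : #|B :&: (q @: first_row r)| <= #|MC :|: PB|.
  apply: (card_rel (R := fun w j => [exists v in first_row r, (v.2 == j) && (q v == w)])).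
  - move=> w /setIP[wB /imsetP[[y j] vf Ew]].
    exists j; apply/andP; split; last first.
      by apply/existsP; exists (y, j); rewrite vf eqxx Ew eqxx.
    have qc : q (y, j) \in colset mu j by exact: (subsetP (sub_col mu y j)) _ (hq _ vf).
    case: (boolP [exists z in colset mu j, z \in A]) => h.
      rewrite inE; apply/orP; left; rewrite inE h /=.
      by apply/existsP; exists (q (y, j)); rewrite qc -Ew wB.
    rewrite inE; apply/orP; right; rewrite inE; apply/subsetP => z' z'in.
    rewrite hAB; apply/negP => z'A; move/negP: h; apply.
    by apply/existsP; exists z'; rewrite z'in z'A.
  - move=> w w' j _ _ /existsP[v /and3P[vf /eqP vj /eqP vw]]
      /existsP[v' /and3P[vf' /eqP vj' /eqP vw']].
    rewrite -vw -vw'; congr q.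
    move: vf vf'; rewrite !inE; case: v v' vj vj' {vw vw'} => [y1 j1] [y2 j2] /= -> -> h1 h2.
    by congr pair; apply: val_inj; rewrite /= (eqP h1) (eqP h2).
apply: leq_trans HW _; apply: leq_trans (leq_card_setU MC PB) _.
lia.
Qed.

Lemma gl_crossV a b (A B : {set 'I_a * 'I_b}) x y1 y2 :
  (forall v, (v \in B) = (v \notin A)) -> (y1, x) \in A -> (y2, x) \notin A ->
  exists p, [&& p \in cut_edges (@grid_adj a b) A B, p.1.2 == x & p.2.2 == x].
Proof.
move=> hAB h1 h2.
have [k [k' /andP[/eqP kk' Qk]]] := ord_ivt (Q := fun y => (y, x) \in A) h1 h2.
case: (boolP ((k, x) \in A)) Qk => hk /= Qk.
- exists ((k, x), (k', x)); rewrite /cut_edges inE /= hk hAB /= eqxx !andbT.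
  rewrite /grid_adj /= kk' !eqxx orbT /=.
  by move: Qk; case: ((k', x) \in A).
- exists ((k', x), (k, x)); rewrite /cut_edges inE /= hAB hk /= eqxx !andbT.
  rewrite /grid_adj /= kk' !eqxx !orbT andbT.
  by move: Qk; case: ((k', x) \in A).
Qed.

Lemma gl_crossH a b (A B : {set 'I_a * 'I_b}) y x1 x2 :
  (forall v, (v \in B) = (v \notin A)) -> (y, x1) \in A -> (y, x2) \notin A ->
  exists p, [&& p \in cut_edges (@grid_adj a b) A B, p.1.1 == y & p.2.1 == y].
Proof.
move=> hAB h1 h2.
have [k [k' /andP[/eqP kk' Qk]]] := ord_ivt (Q := fun x => (y, x) \in A) h1 h2.
case: (boolP ((y, k) \in A)) Qk => hk /= Qk.
- exists ((y, k), (y, k')); rewrite /cut_edges inE /= hk hAB /= eqxx !andbT.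
  rewrite /grid_adj /= kk' !eqxx /=.
  by move: Qk; case: ((y, k') \in A).
- exists ((y, k'), (y, k)); rewrite /cut_edges inE /= hAB hk /= eqxx !andbT.
  rewrite /grid_adj /= kk' !eqxx !orbT /=.
  by move: Qk; case: ((y, k') \in A).
Qed.

Lemma mixV_count a b (A B : {set 'I_a * 'I_b}) :
  (forall v, (v \in B) = (v \notin A)) ->
  #|[set x | [exists y, (y, x) \in A] && [exists y, (y, x) \in B]]|
    <= #|cut_edges (@grid_adj a b) A B|.
Proof.
move=> hAB.
apply: (card_rel (R := fun x p => (p.1.2 == x) && (p.2.2 == x))).
- move=> x; rewrite inE => /andP[/existsP[y1 h1] /existsP[y2 h2]].
  rewrite hAB in h2.
  have [p /and3P[pc p1 p2]] := gl_crossV hAB h1 h2.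
  by exists p; rewrite pc p1 p2.
- by move=> x x' p _ _ /andP[/eqP <- _] /andP[/eqP <- _].
Qed.

Lemma mixH_count a b (A B : {set 'I_a * 'I_b}) :
  (forall v, (v \in B) = (v \notin A)) ->
  #|[set y | [exists x, (y, x) \in A] && [exists x, (y, x) \in B]]|
    <= #|cut_edges (@grid_adj a b) A B|.
Proof.
move=> hAB.
apply: (card_rel (R := fun y p => (p.1.1 == y) && (p.2.1 == y))).
- move=> y; rewrite inE => /andP[/existsP[x1 h1] /existsP[x2 h2]].
  rewrite hAB in h2.
  have [p /and3P[pc p1 p2]] := gl_crossH hAB h1 h2.
  by exists p; rewrite pc p1 p2.
- by move=> y y' p _ _ /andP[/eqP <- _] /andP[/eqP <- _].
Qed.

Lemma caseB a b r1 r2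
  (mu1 : 'I_r1 * 'I_r1 -> {set 'I_a * 'I_b})
  (mu2 : 'I_r2 * 'I_r2 -> {set 'I_a * 'I_b})
  (q1 : 'I_r1 * 'I_r1 -> 'I_a * 'I_b)
  (q2 : 'I_r2 * 'I_r2 -> 'I_a * 'I_b) (A B : {set 'I_a * 'I_b}) :
  minor_map (@grid_adj r1 r1) (@grid_adj a b) mu1 ->
  minor_map (@grid_adj r2 r2) (@grid_adj a b) mu2 ->
  (forall v, v \in first_row r1 -> q1 v \in mu1 v) ->
  (forall v, v \in first_row r2 -> q2 v \in mu2 v) ->
  (forall v, (v \in B) = (v \notin A)) ->
  (forall y, exists x, (y, x) \in A) -> (forall x, exists y, (y, x) \in A) ->
  #|B :&: ((q1 @: first_row r1) :|: (q2 @: first_row r2))|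
    <= 6 * #|cut_edges (@grid_adj a b) A B|.
Proof.
move=> Hm1 Hm2 hq1 hq2 hAB hy hx.
set s := #|cut_edges _ A B|.
have esym := @grid_adj_sym a b.
have hB : #|B| <= s * s.
  set MH := [set y | [exists x, (y, x) \in A] && [exists x, (y, x) \in B]].
  set MV := [set x | [exists y, (y, x) \in A] && [exists y, (y, x) \in B]].
  apply: (@leq_trans (#|MH| * #|MV|)); last first.
    by apply: leq_mul; [exact: mixH_count | exact: mixV_count].
  rewrite -cardsX; apply: (card_rel (R := fun v p => p == v)).
  - move=> [y x] vB; exists (y, x); rewrite eqxx andbT.
    apply/setXP; split; rewrite inE; apply/andP; split.
    + by have [x' h] := hy y; apply/existsP; exists x'.
    + by apply/existsP; exists x.
    + by have [y' h] := hx x; apply/existsP; exists y'.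
    + by apply/existsP; exists y.
  - by move=> v v' p _ _ /eqP -> /eqP.
rewrite setIUr; apply: leq_trans (leq_card_setU _ _) _.
have h1 := minor_Bcount esym Hm1 hq1 hAB (erefl s) hB.
have h2 := minor_Bcount esym Hm2 hq2 hAB (erefl s) hB.
apply: leq_trans (leq_add h1 h2) _; lia.
Qed.

Lemma first_row_card r : #|first_row r| <= r.
Proof.
suff : #|first_row r| <= #|[set: 'I_r]| by rewrite cardsT card_ord.
apply: (card_rel (R := fun v j => v.2 == j)).
- by move=> v _; exists v.2; rewrite inE eqxx.
- move=> [y1 j1] [y2 j2] j; rewrite !inE /= => h1 h2 /eqP -> /eqP ->.
  by congr pair; apply: val_inj; rewrite /= (eqP h1) (eqP h2).
Qed.

Lemma grid_width a b r (mu : 'I_r * 'I_r -> {set 'I_a * 'I_b}) :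
  minor_map (@grid_adj r r) (@grid_adj a b) mu -> (r <= a) && (r <= b).
Proof.
move=> Hm; apply/andP; split.
- have := width (K := 'I_a) (col := fun v : 'I_a * 'I_b => val v.2) (rw := fun v => v.1)
    (@grid_adj_sym a b) _ _ Hm; rewrite card_ord; apply.
    by move=> [u1 u2] [v1 v2] /= -> h; congr pair; exact: val_inj.
  move=> [u1 u2] [v1 v2]; rewrite /grid_adj /=.
  by case/orP=> [/andP[_ /orP[/eqP h|/eqP h]]|/andP[/eqP/(congr1 (@nat_of_ord _)) h _]]; lia.
- have := width (K := 'I_b) (col := fun v : 'I_a * 'I_b => val v.1) (rw := fun v => v.2)
    (@grid_adj_sym a b) _ _ Hm; rewrite card_ord; apply.
    by move=> [u1 u2] [v1 v2] /= -> h; congr pair; exact: val_inj.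
  move=> [u1 u2] [v1 v2]; rewrite /grid_adj /=.
  by case/orP=> [/andP[/eqP/(congr1 (@nat_of_ord _)) h _]|/andP[_ /orP[/eqP h|/eqP h]]]; lia.
Qed.

Unset Implicit Arguments.

Theorem lemma10 (a b r1 r2 : nat)
  (mu1 : 'I_r1 * 'I_r1 -> {set 'I_a * 'I_b})
  (mu2 : 'I_r2 * 'I_r2 -> {set 'I_a * 'I_b})
  (q1 : 'I_r1 * 'I_r1 -> 'I_a * 'I_b)
  (q2 : 'I_r2 * 'I_r2 -> 'I_a * 'I_b) :
  (0 < r1)%N -> (r1 <= r2)%N ->
  minor_map (@grid_adj r1 r1) (@grid_adj a b) mu1 ->
  minor_map (@grid_adj r2 r2) (@grid_adj a b) mu2 ->
  mu_img mu1 setT :&: mu_img mu2 setT = set0 ->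
  (forall v, v \in first_row r1 -> q1 v \in mu1 v) ->
  (forall v, v \in first_row r2 -> q2 v \in mu2 v) ->
  cut_linked (@grid_adj a b) (1 / 384)%R
    ((q1 @: first_row r1) :|: (q2 @: first_row r2)).
Proof.
move=> _ _ Hm1 Hm2 _ hq1 hq2 A B dAB uAB.
have hAB : forall v, (v \in B) = (v \notin A).
  move=> v; case vA: (v \in A) => /=.
    exact: (disjointFr dAB vA).
  have : v \in A :|: B by rewrite uAB inE.
  by rewrite inE vA.
have hBA : forall v, (v \in A) = (v \notin B) by move=> v; rewrite hAB negbK.
set X := _ :|: _.
have esym := @grid_adj_sym a b.
have sBA : #|cut_edges (@grid_adj a b) B A| = #|cut_edges (@grid_adj a b) A B|.
  apply/eqP; rewrite eqn_leq; apply/andP; split.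
  - apply: (card_rel (R := fun p p' => p' == (p.2, p.1))).
    + move=> [u v]; rewrite /cut_edges !inE /= => /and3P[uB vA euv].
      by exists (v, u); rewrite !inE /= vA uB esym //= eqxx.
    + by move=> [u v] [u' v'] p _ _ /eqP -> /eqP [-> ->].
  - apply: (card_rel (R := fun p p' => p' == (p.2, p.1))).
    + move=> [u v]; rewrite /cut_edges !inE /= => /and3P[uB vA euv].
      by exists (v, u); rewrite !inE /= vA uB esym //= eqxx.
    + by move=> [u v] [u' v'] p _ _ /eqP -> /eqP [-> ->].
set s := #|cut_edges _ A B|.
suff H : minn #|A :&: X| #|B :&: X| <= 384 * s.
  have H' : ((minn #|A :&: X| #|B :&: X|)%:R <= 384%:R * s%:R :> rat)%R.
    by rewrite -natrM ler_nat.
  move: H'; set m := ((minn _ _)%:R)%R; set t := (s%:R)%R => H'.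
  have -> : (384%:R = 384 :> rat)%R by [].
  lra.
pose pA := [exists y, [forall x, (y, x) \in A]] || [exists x, [forall y, (y, x) \in A]].
pose pB := [exists y, [forall x, (y, x) \in B]] || [exists x, [forall y, (y, x) \in B]].
case: (boolP (pA && pB)) => [/andP[pAt pBt]|npAB].
  have /andP[w1a w1b] := grid_width Hm1.
  have /andP[w2a w2b] := grid_width Hm2.
  have cX : #|X| <= r1 + r2.
    apply: leq_trans (leq_card_setU _ _) _; apply: leq_add.
      exact: leq_trans (leq_imset_card _ _) (first_row_card r1).
    exact: leq_trans (leq_imset_card _ _) (first_row_card r2).
  have hm : minn #|A :&: X| #|B :&: X| <= #|X|.
    exact: leq_trans (geq_minl _ _) (subset_leq_card (subsetIr A X)).
  suff key : (a <= s) || (b <= s) by case/orP: key => ?; lia.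
  case/orP: pAt => [/existsP[y1 /forallP h1]|/existsP[x1 /forallP h1]];
  case/orP: pBt => [/existsP[y2 /forallP h2]|/existsP[x2 /forallP h2]].
  - apply/orP; right.
    suff : #|[set: 'I_b]| <= s by rewrite cardsT card_ord.
    apply: (card_rel (R := fun x p => (p.1.2 == x) && (p.2.2 == x))).
    + move=> x _; have := h2 x; rewrite hAB => h2x.
      have [p /and3P[pc p1 p2]] := gl_crossV hAB (h1 x) h2x.
      by exists p; rewrite pc p1 p2.
    + by move=> x x' p _ _ /andP[/eqP <- _] /andP[/eqP <- _].
  - by have := h2 y1; rewrite hAB h1.
  - by have := h2 x1; rewrite hAB h1.
  - apply/orP; left.
    suff : #|[set: 'I_a]| <= s by rewrite cardsT card_ord.
    apply: (card_rel (R := fun y p => (p.1.1 == y) && (p.2.1 == y))).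
    + move=> y _; have := h2 y; rewrite hAB => h2y.
      have [p /and3P[pc p1 p2]] := gl_crossH hAB (h1 y) h2y.
      by exists p; rewrite pc p1 p2.
    + by move=> y y' p _ _ /andP[/eqP <- _] /andP[/eqP <- _].
case: (boolP pB) => hpB.
  have npA : ~~ pA by move: npAB; rewrite hpB andbT.
  move: npA; rewrite negb_or => /andP[nH nV].
  have hy : forall y, exists x, (y, x) \in B.
    move=> y; have : ~~ [forall x, (y, x) \in A].
      by apply: contra nH => h; apply/existsP; exists y.
    by rewrite negb_forall => /existsP[x hx]; exists x; rewrite hAB.
  have hx : forall x, exists y, (y, x) \in B.
    move=> x; have : ~~ [forall y, (y, x) \in A].
      by apply: contra nV => h; apply/existsP; exists x.
    by rewrite negb_forall => /existsP[y hy']; exists y; rewrite hAB.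
  have := caseB Hm1 Hm2 hq1 hq2 hBA hy hx; rewrite sBA -/s -/X => h.
  apply: leq_trans (geq_minl _ _) _; apply: leq_trans h _; lia.
move: hpB; rewrite negb_or => /andP[nH nV].
have hy : forall y, exists x, (y, x) \in A.
  move=> y; have : ~~ [forall x, (y, x) \in B].
    by apply: contra nH => h; apply/existsP; exists y.
  by rewrite negb_forall => /existsP[x hx]; exists x; rewrite hBA.
have hx : forall x, exists y, (y, x) \in A.
  move=> x; have : ~~ [forall y, (y, x) \in B].
    by apply: contra nV => h; apply/existsP; exists x.
  by rewrite negb_forall => /existsP[y hy']; exists y; rewrite hBA.
have := caseB Hm1 Hm2 hq1 hq2 hAB hy hx; rewrite -/s -/X => h.
apply: leq_trans (geq_minr _ _) _; apply: leq_trans h _; lia.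
Qed.
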